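(* For $d\ge2$ and an exponent $e\in\{1,\dots,d-1\}$, let $\varkappa^e\subset\mathfrak a$ be the Kostant line of $\mathfrak{sl}_d(\mathbb R)$ and $\sigma_j(a)=a_j-a_{j+1}$. Then $\sigma_j(\varkappa^e)=0$ in each of the following cases: (1) $d=2n$, $e$ even and $j=n$; (2) $j=2$, $e$ arbitrary and $d=1+e(e+1)/2$; (3) $(d,e,j)=(4m+3,2m+1,2m)$ for every integer $m\ge1$; (4) $e=3$ and $(d,j)^T=\begin{pmatrix}4&-5\\1&-1\end{pmatrix}^k\begin{pmatrix}7\\2\end{pmatrix}$ for any integer $k\ge0$; (5) $e=4$ and $(d,j)^T=\begin{pmatrix}6&-7\\1&-1\end{pmatrix}^k\begin{pmatrix}11\\2\end{pmatrix}$ or $(d,j)^T=\begin{pmatrix}6&-7\\1&-1\end{pmatrix}^k\begin{pmatrix}17\\3\end{pmatrix}$ for any integer $k\ge0$.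
   Context: $\mathfrak a=\{a\in\mathbb R^d:\sum_ia_i=0\}$ is the space of traceless diagonal matrices. Let $H=\mathrm{diag}(d-1,d-3,\dots,1-d)$, $E=\sum_{i=1}^{d-1}E_{i,i+1}$ and $F=\sum_{i=1}^{d-1}i(d-i)E_{i+1,i}$ (where $E_{k,l}$ is the elementary matrix with $1$ in entry $(k,l)$); they span a principal $\mathfrak{sl}_2$, $\mathfrak s$. Under $\mathrm{ad}\,\mathfrak s$, $\mathfrak{sl}_d(\mathbb R)=\bigoplus_{e=1}^{d-1}V_e$ with $V_e$ irreducible of dimension $2e+1$, and the Kostant line is $\varkappa^e=V_e\cap\mathfrak a$ (spanned by $(\mathrm{ad}F)^e(E^e)$, $E^e$ the $e$-th matrix power). *)

(* Defs.v *)
From HB Require Import structures.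
From mathcomp Require Import all_boot all_order all_algebra.
From mathcomp Require Import reals.
Set Implicit Arguments. Unset Strict Implicit. Unset Printing Implicit Defensive.
Import Order.TTheory GRing.Theory Num.Theory.
Local Open Scope ring_scope.

Section Kostant.
Variable R : realType.
Variable d : nat.

Definition prinE : 'M[R]_d := \matrix_(r, c) (if (c : nat) == r.+1 then 1 else 0).

(* F = sum_{i=1}^{d-1} i(d-i) E_{i+1,i}  (0-indexed: entry (k+1, k) is (k+1)(d-k-1)) *)
Definition prinF : 'M[R]_d :=
  \matrix_(r, c) (if (r : nat) == c.+1 then ((c.+1 * (d - c.+1))%N)%:R else 0).

Definition prinH : 'M[R]_d :=
  \matrix_(r, c) (if r == c then (d%:R - 1) - 2 * (r : nat)%:R else 0).

Definition adF (X : 'M[R]_d) : 'M[R]_d := prinF *m X - X *m prinF.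

Fixpoint mxpow (A : 'M[R]_d) (e : nat) : 'M[R]_d :=
  if e is e'.+1 then A *m mxpow A e' else 1%:M.

Definition kostant_gen (e : nat) : 'M[R]_d := iter e adF (mxpow prinE e).

Definition kostant_line (e : nat) : 'M[R]_d -> Prop :=
  fun a => exists c : R, a = c *: kostant_gen e.

(* a_i, 1-indexed diagonal entry *)
Definition diag_at (A : 'M[R]_d) (i : nat) : R :=
  match (insub i.-1 : option 'I_d) with Some k => A k k | None => 0 end.

Definition sigma (j : nat) (A : 'M[R]_d) : R := diag_at A j - diag_at A j.+1.

End Kostant.

Definition mx22 (a b c e : int) : 'M[int]_2 :=
  \matrix_(r, s) (if (r : nat) == 0%N then (if (s : nat) == 0%N then a else b)
                  else (if (s : nat) == 0%N then c else e)).

Definition col2 (a b : int) : 'cV[int]_2 :=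
  \col_r (if (r : nat) == 0%N then a else b).

Definition orbit_pt (M : 'M[int]_2) (k : nat) (d0 j0 : int) (d j : nat) : Prop :=
  let v := (M ^+ k) *m col2 d0 j0 in
  v ord0 ord0 = (d : int) /\ v ord_max ord0 = (j : int).

(* Main.v *)
Require Import Defs.
From HB Require Import structures.
From mathcomp Require Import all_boot all_order all_algebra.
From mathcomp Require Import reals.
From mathcomp Require Import zify ring lra.
Set Implicit Arguments. Unset Strict Implicit. Unset Printing Implicit Defensive.
Import Order.TTheory GRing.Theory Num.Theory.
Local Open Scope ring_scope.

Lemma by_comb (R : realType) (K a b : R) : K != 0 -> K * (a - b) = 0 -> a = b.
Proof. by move=> hK /eqP; rewrite mulf_eq0 (negbTE hK) subr_eq0 => /eqP. Qed.

Lemma nat_neq0 (R : realType) (m : nat) : (0 < m)%N -> (m%:R : R) != 0.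
Proof. by rewrite pnatr_eq0 -lt0n. Qed.

Section Seq.
Variable R : realType.
Variable n : nat.
Variable c : R.

Definition recP (y : nat -> R) (i : nat) :=
  (i%:R + 1) * (n%:R - i%:R) * (y i - y i.+1) - i%:R * (n%:R + 1 - i%:R) * (y i.-1 - y i) = c * y i.

Lemma comb4 (a1 b1 a2 b2 a3 b3 a4 b4 k1 k2 k3 k4 z : R) :
  a1 = b1 -> a2 = b2 -> a3 = b3 -> a4 = b4 ->
  z = k1 * (a1 - b1) + k2 * (a2 - b2) + k3 * (a3 - b3) + k4 * (a4 - b4) -> z = 0.
Proof. by move=> -> -> -> -> ->; rewrite !subrr !mulr0 !addr0. Qed.

Lemma uniq_sol (y p : nat -> R) :
  (forall i, (i < n)%N -> recP y i) -> (forall i, (i < n)%N -> recP p i) ->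
  forall i, (i <= n)%N -> p 0%N * y i = y 0%N * p i.
Proof.
move=> ry rp.
suff H : forall i, (i < n)%N -> p 0%N * y i = y 0%N * p i /\ p 0%N * y i.+1 = y 0%N * p i.+1.
  case=> [|i] Hi; first by rewrite mulrC.
  by case: (H i Hi).
elim=> [|i IH] Hi.
  split; first by rewrite mulrC.
  have h1 := ry 0%N Hi; have h2 := rp 0%N Hi; rewrite /recP /= in h1 h2.
  have hn : (n%:R : R) != 0 by rewrite pnatr_eq0 -lt0n.
  apply: (mulfI hn); apply/eqP; rewrite -subr_eq0; apply/eqP.
  apply: (comb4 h1 h2 (erefl 0) (erefl 0) (k1 := - p 0%N) (k2 := y 0%N) (k3 := 0) (k4 := 0)).
  ring.
have [IH1 IH2] := IH (ltnW Hi).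
split=> //.
have h1 := ry i.+1 Hi; have h2 := rp i.+1 Hi; rewrite /recP /= -!natr1 in h1 h2.
have hK : ((i.+2)%:R * (n%:R - (i.+1)%:R) : R) != 0.
  by rewrite -natrB ?(ltnW Hi) // -natrM pnatr_eq0 muln_eq0 negb_or /=; rewrite subn_eq0 -ltnNge.
apply: (mulfI hK); apply/eqP; rewrite -subr_eq0; apply/eqP.
pose K : R := (i.+2)%:R * (n%:R - (i.+1)%:R).
pose L : R := (i%:R + 1) * (n%:R + 1 - (i%:R + 1)).
apply: (comb4 h1 h2 IH1 IH2 (k1 := - p 0%N) (k2 := y 0%N) (k3 := - L) (k4 := (K + L - c))).
rewrite /K /L -!natr1; ring.
Qed.

End Seq.

Section K.
Variable R : realType.
Variable n : nat.
Local Notation d := n.+1.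
Local Notation E := (prinE R d).
Local Notation F := (prinF R d).
Local Notation H := (prinH R d).

Lemma sum_if1 (g : 'I_d -> R) (m : nat) :
  \sum_(k < d) (if (k : nat) == m then g k else 0) =
  if (m < d)%N then g (inord m) else 0.
Proof.
case: ltnP => Hm.
- rewrite (bigD1 (inord m)) //= inordK // eqxx big1 ?addr0 // => k Hk.
  case: eqP => // Ek; case/eqP: Hk; apply: val_inj; rewrite /= inordK // -Ek.
- rewrite big1 // => k _; case: eqP => // Ek; move: (ltn_ord k); by rewrite Ek ltnNge Hm.
Qed.

Lemma sum_if2 (g : 'I_d -> R) (m : nat) :
  \sum_(k < d) (if m == (k : nat).+1 then g k else 0) =
  if (0 < m)%N then (if (m.-1 < d)%N then g (inord m.-1) else 0) else 0.
Proof.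
case: m => [|m] /=.
- by rewrite big1.
- by rewrite -sum_if1; apply: eq_bigr => k _; rewrite eqSS eq_sym.
Qed.

Definition ff (c : nat) : R := ((c.+1 * (d - c.+1))%N)%:R.
Definition hh (r : nat) : R := d%:R - 1 - 2 * r%:R.

Lemma mulEl (X : 'M[R]_d) i j :
  (E *m X) i j = if (i.+1 < d)%N then X (inord i.+1) j else 0.
Proof.
rewrite mxE -(sum_if1 (fun k => X k j)); apply: eq_bigr => k _; rewrite mxE.
by case: eqP => _; rewrite ?mul1r ?mul0r.
Qed.

Lemma mulEr (X : 'M[R]_d) i j :
  (X *m E) i j = if (0 < j)%N then (if (j.-1 < d)%N then X i (inord j.-1) else 0) else 0.
Proof.
rewrite mxE -(sum_if2 (fun k => X i k)); apply: eq_bigr => k _; rewrite mxE.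
by case: eqP => _; rewrite ?mulr1 ?mulr0.
Qed.

Definition fl (i : nat) : R := ((i * (d - i))%N)%:R.

Lemma mulFl (X : 'M[R]_d) (i j : 'I_d) :
  (F *m X) i j = fl i * X (inord i.-1) j.
Proof.
rewrite mxE (eq_bigr (fun k : 'I_d => if (i:nat) == k.+1 then ff k * X k j else 0)).
  rewrite sum_if2; case: i => [[|i]] //= Hi; first by rewrite /fl mul0r.
  by rewrite (leq_trans _ Hi) // inordK ?(leq_trans _ Hi).
by move=> k _; rewrite mxE; case: eqP => _; rewrite ?mul0r.
Qed.

Lemma ff_last (j : nat) : j.+1 = d -> ff j = 0.
Proof. by move=> h; rewrite /ff h subnn muln0. Qed.

Lemma mulFr (X : 'M[R]_d) i (j : 'I_d) :
  (X *m F) i j = X i (inord j.+1) * ff j.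
Proof.
rewrite mxE (eq_bigr (fun k : 'I_d => if (k:nat) == j.+1 then X i k * ff j else 0)).
  rewrite sum_if1; case: ifP => // h; rewrite ff_last ?mulr0 //.
  by apply/eqP; rewrite eqn_leq ltn_ord leqNgt h.
by move=> k _; rewrite mxE; case: eqP => _; rewrite ?mulr0.
Qed.

Lemma mulHl (X : 'M[R]_d) i j : (H *m X) i j = hh i * X i j.
Proof.
rewrite mxE (eq_bigr (fun k : 'I_d => if (k:nat) == i then hh i * X k j else 0)).
  by rewrite sum_if1 ltn_ord inord_val.
move=> k _; rewrite mxE /hh; case: (eqVneq i k) => [->|ne]; first by rewrite eqxx.
by rewrite mul0r; case: eqP => // /val_inj E'; rewrite E' eqxx in ne.
Qed.

Lemma mulHr (X : 'M[R]_d) i j : (X *m H) i j = X i j * hh j.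
Proof.
rewrite mxE (eq_bigr (fun k : 'I_d => if (k:nat) == j then X i j * hh j else 0)).
  by rewrite sum_if1 ltn_ord.
move=> k _; rewrite mxE /hh; case: (eqVneq k j) => [->|ne]; first by rewrite eqxx.
by rewrite mulr0; case: eqP => // /val_inj E'; rewrite E' eqxx in ne.
Qed.


Lemma entryB (A B : 'M[R]_d) i j : (A - B) i j = A i j - B i j.
Proof. by rewrite !mxE. Qed.
Lemma entryD (A B : 'M[R]_d) i j : (A + B) i j = A i j + B i j.
Proof. by rewrite !mxE. Qed.
Lemma entryZ c (A : 'M[R]_d) i j : (c *: A) i j = c * A i j.
Proof. by rewrite !mxE. Qed.

Definition adX (A B : 'M[R]_d) := A *m B - B *m A.

Lemma ffE c : (c < d)%N -> ff c = (c%:R + 1) * (d%:R - c%:R - 1).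
Proof. by move=> h; rewrite /ff natrM natrB // -natr1; ring. Qed.

Ltac elim_eqs :=
  repeat match goal with
  | h : is_true (?a == ?b) |- _ => move/eqP: h => h; try subst a; try subst b
  | h : (?a.+1 = ?b.+1) |- _ => case: h => h
  end.

Ltac sp := repeat (first [ rewrite inordK; [|lia] | case: ifP => /= ? ]).

Ltac fin := rewrite /fl /ff /hh ?natrM ?natrB; try lia; rewrite -?natr1 /=; try ring.

Ltac nrw a b := (have -> : a%:R = b%:R :> R by apply/eqP; rewrite eqr_nat; apply/eqP; lia).

Ltac arith i j :=
  first [ ring
  | nrw i 0%N; ring
  | nrw j 0%N; ring
  | nrw n i; ring
  | nrw n j; ring
  | nrw n 0%N; ring
  | nrw i 0%N; nrw n 0%N; ring
  | nrw j 0%N; nrw n 0%N; ring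
  | nrw n i.+1; ring
  | nrw n j.+1; ring
  | idtac ].

Lemma EF_H : adX E F = H.
Proof.
apply/matrixP => i j; rewrite entryB mulEl mulFl !mxE.
rewrite -(inj_eq val_inj) /=.
case: i j => [i Hi] [j Hj] /=.
sp; elim_eqs; try (exfalso; lia).
all: fin.
all: arith i j.
Qed.

Lemma HF : adX H F = - (2%:R *: F).
Proof.
apply/matrixP => i j; rewrite entryB mulHl mulHr !mxE.
case: i j => [i Hi] [j Hj] /=.
sp; elim_eqs; try (exfalso; lia).
all: rewrite /hh -?natr1; ring.
Qed.

Lemma HE : adX H E = 2%:R *: E.
Proof.
apply/matrixP => i j; rewrite entryB mulHl mulHr !mxE.
case: i j => [i Hi] [j Hj] /=.
sp; elim_eqs; try (exfalso; lia).
all: rewrite /hh -?natr1; ring.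
Qed.


Lemma entryN (A : 'M[R]_d) i j : (- A) i j = - A i j.
Proof. by rewrite !mxE. Qed.
Lemma sAl a (A B : 'M[R]_d) : (a *: A) *m B = a *: (A *m B).
Proof. by rewrite scalemxAl. Qed.
Lemma sAr a (A B : 'M[R]_d) : A *m (a *: B) = a *: (A *m B).
Proof. by rewrite scalemxAr. Qed.

Lemma entry0 i j : (0 : 'M[R]_d) i j = 0.
Proof. by rewrite mxE. Qed.

Ltac mxnorm := rewrite ?(mulmx0, mul0mx, mulmxDl, mulmxDr, mulmxBl, mulmxBr, mulNmx, mulmxN, sAl, sAr, mulmxA).
Ltac mxring := mxnorm; apply/matrixP => ? ?; rewrite ?(entryB, entryD, entryZ, entryN, entry0) -?natr1; ring.

Lemma adX_comm A B X : adX A (adX B X) - adX B (adX A X) = adX (adX A B) X.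
Proof. rewrite /adX; mxring. Qed.

Lemma adXZ A c X : adX A (c *: X) = c *: adX A X.
Proof. rewrite /adX; mxring. Qed.

Lemma pow_comm k : E *m mxpow E k = mxpow E k *m E.
Proof. elim: k => [|k IH] /=; first by rewrite mulmx1 mul1mx. by rewrite {1}IH mulmxA. Qed.

Lemma HEpow k : adX H (mxpow E k) = (2 * k%:R) *: mxpow E k.
Proof.
elim: k => [|k IH] /=; first by rewrite /adX mulmx1 mul1mx subrr mulr0 scale0r.
have hE : H *m E = E *m H + 2%:R *: E.
  by rewrite -HE /adX addrC subrK.
have hP : H *m mxpow E k = mxpow E k *m H + (2 * k%:R) *: mxpow E k.
  by rewrite -IH /adX addrC subrK.
rewrite /adX mulmxA hE mulmxDl -[E *m H *m _]mulmxA hP; mxring.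
Qed.

Lemma EEpow k : adX E (mxpow E k) = 0.
Proof. by rewrite /adX pow_comm subrr. Qed.

Lemma cas_entry (X : 'M[R]_d) (i : nat) : (i < d)%N ->
 (adX E (adX F X) + adX F (adX E X)) (inord i) (inord i) =
 2 * (ff i * (X (inord i) (inord i) - X (inord i.+1) (inord i.+1))
      - fl i * (X (inord i.-1) (inord i.-1) - X (inord i) (inord i))).
Proof.
move=> Hi; rewrite entryD /adX.
rewrite !(entryB, mulEl, mulEr, mulFl, mulFr).
case: i Hi => [|i] Hi /=.
all: sp; try (exfalso; lia).
all: rewrite /fl /ff ?natrM ?natrB; try lia; rewrite -?natr1 /=.
all: arith i i.
Qed.

Definition tau (X : 'M[R]_d) : 'M[R]_d := \matrix_(i, j) X (rev_ord j) (rev_ord i).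

Lemma tau_mul A B : tau (A *m B) = tau B *m tau A.
Proof.
apply/matrixP => i j; rewrite !mxE (reindex_inj rev_ord_inj) /=.
by apply: eq_bigr => k _; rewrite !mxE mulrC.
Qed.

Lemma tauB A B : tau (A - B) = tau A - tau B.
Proof. by apply/matrixP => i j; rewrite !mxE. Qed.
Lemma tauZ c A : tau (c *: A) = c *: tau A.
Proof. by apply/matrixP => i j; rewrite !mxE. Qed.

Lemma tauE : tau E = E.
Proof.
apply/matrixP => i j; rewrite !mxE /=.
case: i j => [i Hi] [j Hj] /=.
by do 2 case: eqP => ? //; lia.
Qed.

Lemma tauF : tau F = F.
Proof.
apply/matrixP => i j; rewrite !mxE /=.
case: i j => [i Hi] [j Hj] /=.
do 2 case: eqP => ? //; try lia.
subst i; congr (_%:R); rewrite mulnC; congr (_ * _)%N; lia.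
Qed.

Lemma tau_pow k : tau (mxpow E k) = mxpow E k.
Proof.
elim: k => [|k IH] /=.
  by apply/matrixP => i j; rewrite !mxE (inj_eq rev_ord_inj) eq_sym.
by rewrite tau_mul IH tauE pow_comm.
Qed.

Lemma tau_adF X : tau (adX F X) = - adX F (tau X).
Proof. by rewrite /adX tauB !tau_mul tauF opprB. Qed.

Lemma tau_diag X (i : nat) : (i < d)%N ->
  (tau X) (inord i) (inord i) = X (inord (n - i)) (inord (n - i)).
Proof.
move=> Hi; rewrite mxE; have -> // : rev_ord (inord i) = inord (n - i) :> 'I_d.
by apply: val_inj; rewrite /= !inordK //; lia.
Qed.

Variable e : nat.
Definition w k := iter k (adX F) (mxpow E e).

Lemma Hw k : adX H (w k) = (2 * e%:R - 2 * k%:R) *: w k.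
Proof.
elim: k => [|k IH] /=; first by rewrite HEpow mulr0 subr0.
have := adX_comm H F (w k); rewrite HF IH => /eqP; rewrite subr_eq => /eqP ->.
rewrite /adX; mxring.
Qed.

Lemma Ew k : adX E (w k) = (k%:R * (2 * e%:R + 1 - k%:R)) *: w k.-1.
Proof.
elim: k => [|k IH] /=; first by rewrite EEpow mul0r scale0r.
have := adX_comm E F (w k); rewrite EF_H IH Hw => /eqP; rewrite subr_eq => /eqP ->.
case: k IH => [|k] IH /=; first by rewrite mul0r scale0r /adX; mxring.
rewrite adXZ; mxring.
Qed.

Lemma casimir : adX E (adX F (w e)) + adX F (adX E (w e)) = (2 * e%:R * (e%:R + 1)) *: w e.
Proof.
have -> : adX F (w e) = w e.+1 by [].
rewrite Ew Ew /=.
rewrite adXZ.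
case: (posnP e) => [->|/prednK <-]; rewrite /=; mxring.
Qed.


Lemma tau_w k : tau (w k) = (-1) ^+ k *: w k.
Proof.
elim: k => [|k IH] /=; first by rewrite tau_pow scale1r.
by rewrite tau_adF IH adXZ exprS mulN1r scaleNr.
Qed.


Definition yv (k : nat) : R := w e (inord k) (inord k).

Lemma yrec i : (i < n)%N -> recP n (e%:R * (e%:R + 1)) yv i.
Proof.
move=> hi.
have h := congr1 (fun M : 'M[R]_d => M (inord i) (inord i)) casimir.
rewrite /= cas_entry ?entryZ in h; last exact: ltnW hi.
rewrite /ff /fl !natrM !natrB in h; try lia.
rewrite /recP /yv.
have h2 : (2 : R) != 0 by rewrite pnatr_eq0.
apply: (by_comb h2).
apply: (comb4 h (erefl (0:R)) (erefl (0:R)) (erefl (0:R)) (k1 := 1) (k2 := 0) (k3 := 0) (k4 := 0)).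
rewrite -!natr1; ring.
Qed.

Lemma ysym i : (i <= n)%N -> yv (n - i) = (-1) ^+ e * yv i.
Proof.
move=> hi.
have h := congr1 (fun M : 'M[R]_d => M (inord i) (inord i)) (tau_w e).
by rewrite /= tau_diag // entryZ in h.
Qed.

End K.



Section Cases.
Variable R : realType.


Lemma case2 (n : nat) (y : nat -> R) :
  (2 <= n)%N -> (forall i, (i < n)%N -> recP n (2 * n%:R) y i) -> y 1%N = y 2%N.
Proof.
move=> hn ry.
have h0 := ry 0%N (ltnW hn); have h1 := ry 1%N hn.
rewrite /recP /= in h0 h1.
have hs : y 1%N + y 0%N = 0.
  apply: (by_comb (K := n%:R)); first by apply: nat_neq0; lia.
  apply: (comb4 h0 (erefl (0:R)) (erefl (0:R)) (erefl (0:R)) (k1 := -1) (k2 := 0) (k3 := 0) (k4 := 0)).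
  ring.
apply: (by_comb (K := 2 * (n.-1)%:R)).
  rewrite mulf_neq0 // ?pnatr_eq0 //; lia.
apply: (comb4 h1 hs (erefl (0:R)) (erefl (0:R)) (k1 := 1) (k2 := n%:R) (k3 := 0) (k4 := 0)).
have -> : (n.-1)%:R = n%:R - 1 :> R by rewrite -subn1 natrB //; lia.
ring.
Qed.


Lemma case3 (i : nat) (y : nat -> R) :
  (forall k, (k < 2 * i + 4)%N -> recP (2 * i + 4)%N ((i.+2)%:R * ((i.+2)%:R + 1)) y k) ->
  (forall k, (k <= 2 * i + 4)%N -> y (2 * i + 4 - k)%N = - y k) ->
  y i = y i.+1.
Proof.
move=> ry sy.
have hz : y i.+2 = 0.
  have h := sy i.+2 ltac:(lia); rewrite (_ : (2 * i + 4 - i.+2 = i.+2)%N) in h; last by lia.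
  apply: (by_comb (K := 2)); first by rewrite pnatr_eq0.
  apply: (comb4 h (erefl (0:R)) (erefl (0:R)) (erefl (0:R)) (k1 := 1) (k2 := 0) (k3 := 0) (k4 := 0)).
  ring.
have h := ry i.+1 ltac:(lia); rewrite /recP /= in h.
apply: (by_comb (K := (i.+1)%:R * (i.+4)%:R)).
  by rewrite mulf_neq0 // nat_neq0.
have hz' : y i.+2 = 0 by [].
apply: (comb4 h hz' (erefl (0:R)) (erefl (0:R)) (k1 := -1) (k2 := - ((i.+2)%:R * (i.+3)%:R)) (k3 := 0) (k4 := 0)).
rewrite !natrD -!natr1; ring.
Qed.

Lemma case1 (m : nat) (y : nat -> R) :
  (0 < m)%N -> (forall k, (k <= (2 * m).-1)%N -> y ((2 * m).-1 - k)%N = y k) -> y m.-1 = y m.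
Proof.
move=> hm sy; have := sy m.-1 ltac:(lia).
by rewrite (_ : ((2 * m).-1 - m.-1 = m)%N) //; lia.
Qed.

Lemma poly_rec (n : nat) (c : R) (P : R -> R) :
  (forall x, (x + 1) * (n%:R - x) * (P x - P (x + 1)) - x * (n%:R + 1 - x) * (P (x - 1) - P x) = c * P x) ->
  forall i, recP n c (fun k => P k%:R) i.
Proof.
move=> hP [|i]; rewrite /recP /=.
  by have := hP 0; rewrite !mul0r !subr0 add0r.
have h := hP (i.+1)%:R.
rewrite -[X in P (X - 1)](natr1 (R := R) i) addrK !natr1 in h.
by rewrite !natr1.
Qed.

Lemma case_poly (n : nat) (c : R) (P : R -> R) (y : nat -> R) (a : nat) :
  (forall x, (x + 1) * (n%:R - x) * (P x - P (x + 1)) - x * (n%:R + 1 - x) * (P (x - 1) - P x) = c * P x) ->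
  (forall i, (i < n)%N -> recP n c y i) -> P 0 != 0 -> (a < n)%N ->
  P a%:R = P a.+1%:R -> y a = y a.+1.
Proof.
move=> hP ry hP0 ha hPa.
have U := uniq_sol ry (fun i _ => poly_rec hP i).
apply: (by_comb hP0).
rewrite mulrBr (U a (ltnW ha)) (U a.+1 ha) /= hPa subrr //.
Qed.

End Cases.

Lemma orbit_inv (a b c' e' : int) (Q : int -> int -> int) (d0 j0 : int) (k : nat) :
  (forall x y, Q (a * x + b * y) (c' * x + e' * y) = Q x y) ->
  Q (((mx22 a b c' e' ^+ k) *m col2 d0 j0) ord0 ord0)
    (((mx22 a b c' e' ^+ k) *m col2 d0 j0) ord_max ord0) = Q d0 j0.
Proof.
move=> hQ; elim: k => [|k IH].
  by rewrite expr0 mul1mx !mxE.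
rewrite exprS -mulmxE -mulmxA.
move: IH; set u := _ *m col2 d0 j0 => IH; clearbody u.
rewrite !mxE !big_ord_recl !big_ord0 !mxE /=.
have -> : lift ord0 ord0 = ord_max :> 'I_2 by apply: val_inj.
by rewrite !addr0 -IH hQ.
Qed.

Section Poly.
Variable R : realType.
Variable n : nat.
Definition P3 (x : R) : R :=
  let w := 2 * x - n%:R in 5 * w ^+ 3 - (3 * (n%:R + 1) ^+ 2 - 7) * w.
Definition P4 (x : R) : R :=
  let w := 2 * x - n%:R in let N := n%:R + 1 in
  35 * w ^+ 4 - 10 * (3 * N ^+ 2 - 13) * w ^+ 2 + 3 * (N ^+ 2 - 1) * (N ^+ 2 - 9).

Lemma P3_rec x : (x + 1) * (n%:R - x) * (P3 (x) - P3 (x + 1)) - x * (n%:R + 1 - x) * (P3 (x - 1) - P3 x) = 12 * P3 x.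
Proof. rewrite /P3; ring. Qed.
Lemma P4_rec x : (x + 1) * (n%:R - x) * (P4 (x) - P4 (x + 1)) - x * (n%:R + 1 - x) * (P4 (x - 1) - P4 x) = 20 * P4 x.
Proof. rewrite /P4; ring. Qed.
Lemma P3_0 : P3 0 = - 2 * n%:R * (n%:R - 1) * (n%:R - 2).
Proof. rewrite /P3; ring. Qed.
Lemma P4_0 : P4 0 = 8 * n%:R * (n%:R - 1) * (n%:R - 2) * (n%:R - 3).
Proof. rewrite /P4; ring. Qed.
End Poly.

Lemma diag_atE (R : realType) n (X : 'M[R]_n.+1) k : (0 < k <= n.+1)%N ->
  diag_at X k = X (inord k.-1) (inord k.-1).
Proof.
move=> hk; rewrite /diag_at; case: insubP => [i _ hi|hn]; last first.
  by exfalso; move/negP: hn; apply; lia.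
rewrite (_ : i = inord k.-1) //; apply: val_inj; rewrite hi /= inordK //; lia.
Qed.

Lemma predR (R : realType) j : (0 < j)%N -> ((j.-1)%:R : R) = j%:R - 1.
Proof. by move=> h; rewrite -subn1 natrB. Qed.

Lemma intR (R : realType) (z : int) (m : nat) : z = m%:Z -> (z%:~R : R) = m%:R.
Proof. by move=> ->. Qed.

Lemma Q4_inv : forall x y : int, (fun x y => 3 * x * x - 7 * ((2 * y - x) * (2 * y - x)))
      (6 * x + (-7) * y) (1 * x + (-1) * y) = (fun x y => 3 * x * x - 7 * ((2 * y - x) * (2 * y - x))) x y.
Proof. by move=> x y /=; ring. Qed.

Lemma key4 (R : realType) (n j : nat) : (4 <= n)%N -> (1 <= j < n.+1)%N ->
  (3 * n.+1%:Z * n.+1%:Z - 7 * ((2 * j%:Z - n.+1%:Z) * (2 * j%:Z - n.+1%:Z)) = 20 :> int) ->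
  yv R n 4 j.-1 = yv R n 4 j.
Proof.
move=> He Hj inv.
have invR := congr1 (fun z : int => (z%:~R : R)) inv.
rewrite /= !(intrD, intrB, intrM, intrN) in invR.
have hj1 : j = j.-1.+1 by lia.
rewrite [in RHS]hj1.
apply: (case_poly (P := @P4 R n) (c := 20) (y := yv R n 4) (a := j.-1)).
+ exact: P4_rec.
+ move=> i hi; have := @yrec R n 4 i hi.
  by rewrite (_ : (4%:R * (4%:R + 1) : R) = 20) //; ring.
+ rewrite (_ : @P4 R n 0 = (8 * n * (n - 1) * (n - 2) * (n - 3))%:R).
    by rewrite pnatr_eq0 !muln_eq0; lia.
  by rewrite P4_0 !natrM !natrB; try lia; ring.
+ lia.
+ rewrite -hj1 predR; last by lia.
  apply: (by_comb (K := 1)); first exact: oner_neq0.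
  apply: (comb4 invR (erefl (0:R)) (erefl (0:R)) (erefl (0:R))
    (k1 := 40 * (2 * j%:R - (n%:R + 1))) (k2 := 0) (k3 := 0) (k4 := 0)).
  rewrite /P4; ring.
Qed.

Theorem key (R : realType) (n e j : nat) :
  (1 <= e <= n)%N -> (1 <= j < n.+1)%N ->
  ((exists m : nat, [/\ n.+1 = (2 * m)%N, ~~ odd e & j = m]) \/
   (j = 2%N /\ n.+1 = (1 + e * (e + 1) %/ 2)%N) \/
   (exists m : nat, [/\ (1 <= m)%N, n.+1 = (4 * m + 3)%N, e = (2 * m + 1)%N
                      & j = (2 * m)%N]) \/
   (e = 3%N /\ exists k : nat, orbit_pt (mx22 4 (-5) 1 (-1)) k 7 2 n.+1 j) \/
   (e = 4%N /\ exists k : nat,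
       orbit_pt (mx22 6 (-7) 1 (-1)) k 11 2 n.+1 j \/
       orbit_pt (mx22 6 (-7) 1 (-1)) k 17 3 n.+1 j)) ->
  yv R n e j.-1 = yv R n e j.
Proof.
move=> He Hj [[m [hd he hj]]|[[hj hd]|[[m [hm hd he hj]]|[[he [k [h1 h2]]]|[he [k [[h1 h2]|[h1 h2]]]]]]]].
- subst j.
  have hn : n = (2 * m).-1 by lia.
  apply: (case1 (m := m)); first by lia.
  move=> k hk; rewrite -hn ysym; last by lia.
  by rewrite -signr_odd (negbTE he) expr0 mul1r.
- subst j.
  have hn : n = (e * (e + 1) %/ 2)%N by lia.
  have hnat : (e * (e + 1) = 2 * n)%N.
    by rewrite hn [RHS]mulnC divnK // dvdn2 oddM addn1 /= andbN.
  have hc : (e%:R * (e%:R + 1) : R) = 2 * n%:R.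
    by have h := congr1 (fun k : nat => (k%:R : R)) hnat; rewrite /= natrM natrD natrM in h; exact h.
  apply: (case2 (n := n)); first by lia.
  by move=> i hi; rewrite -hc; exact: yrec.
- have [i hi] : exists i, (2 * m = i.+1)%N by exists (2 * m).-1; lia.
  rewrite hj hi /=.
  have hn' : (2 * i + 4 = n)%N by lia.
  have ho : odd e by rewrite he oddD oddM.
  apply: case3.
  + move=> k hk; rewrite hn' in hk *; rewrite (_ : i.+2 = e); last by lia.
    exact: yrec.
  + move=> k hk; rewrite hn' in hk *; rewrite ysym // -signr_odd ho expr1 mulN1r //.
- subst e.
  have hQ : forall x y : int, (fun x y => x * x - 5 * ((x - 2 * y) * (x - 2 * y)))
      (4 * x + (-5) * y) (1 * x + (-1) * y) = (fun x y => x * x - 5 * ((x - 2 * y) * (x - 2 * y))) x y.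
    by move=> x y /=; ring.
  have inv := orbit_inv 7 2 k hQ.
  rewrite h1 h2 /= in inv.
  have invR := congr1 (fun z : int => (z%:~R : R)) inv.
  rewrite /= !(intrD, intrB, intrM, intrN) in invR.
  have hj1 : j = j.-1.+1 by lia.
  rewrite [in RHS]hj1.
  apply: (case_poly (P := @P3 R n) (c := 12) (y := yv R n 3) (a := j.-1)).
  + exact: P3_rec.
  + move=> i hi; have := @yrec R n 3 i hi.
    by rewrite (_ : (3%:R * (3%:R + 1) : R) = 12) //; ring.
  + rewrite (_ : @P3 R n 0 = - (2 * n * (n - 1) * (n - 2))%:R).
      by rewrite oppr_eq0 pnatr_eq0 !muln_eq0; lia.
    by rewrite P3_0 !natrM !natrB; try lia; ring.
  + lia.
  + rewrite -hj1 predR; last by lia.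
    apply: (by_comb (K := 1)); first exact: oner_neq0.
    apply: (comb4 invR (erefl (0:R)) (erefl (0:R)) (erefl (0:R)) (k1 := 6) (k2 := 0) (k3 := 0) (k4 := 0)).
    rewrite /P3; ring.
- subst e; apply: key4 => //.
  have hQ := Q4_inv.
  have inv := orbit_inv 11 2 k hQ.
  by rewrite h1 h2 /= in inv; rewrite inv.
- subst e; apply: key4 => //.
  have hQ := Q4_inv.
  have inv := orbit_inv 17 3 k hQ.
  by rewrite h1 h2 /= in inv; rewrite inv.
Qed.

Unset Implicit Arguments.
Set Strict Implicit.

Theorem mainTheorem15 (R : realType) (d e j : nat) :
  (2 <= d)%N -> (1 <= e <= d - 1)%N -> (1 <= j < d)%N ->
  ((exists n : nat, [/\ d = (2 * n)%N, ~~ odd e & j = n]) \/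
   (j = 2%N /\ d = (1 + e * (e + 1) %/ 2)%N) \/
   (exists m : nat, [/\ (1 <= m)%N, d = (4 * m + 3)%N, e = (2 * m + 1)%N
                      & j = (2 * m)%N]) \/
   (e = 3%N /\ exists k : nat, orbit_pt (mx22 4 (-5) 1 (-1)) k 7 2 d j) \/
   (e = 4%N /\ exists k : nat,
       orbit_pt (mx22 6 (-7) 1 (-1)) k 11 2 d j \/
       orbit_pt (mx22 6 (-7) 1 (-1)) k 17 3 d j)) ->
  forall a : 'M[R]_d, kostant_line e a -> sigma j a = 0.
Proof.
move=> Hd He Hj Hc.
case: d Hd He Hj Hc => [//|n] Hd He Hj Hc a [c ->].
have He' : (1 <= e <= n)%N by lia.
have hy := @key R n e j He' Hj Hc.
have hy' : (kostant_gen R n.+1 e) (inord j.-1) (inord j.-1) =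
           (kostant_gen R n.+1 e) (inord j) (inord j) := hy.
rewrite /sigma !diag_atE; try lia.
by rewrite !entryZ /= hy' subrr.
Qed.
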